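(* The matrix $\mathcal Q=\mathrm{diag}(q^2)+\frac{N}{(1-\gamma)\kappa^2}\tilde q\tilde q^\top$ is positive semidefinite and its largest eigenvalue satisfies $\lambda_{\max}(\mathcal Q)\le\max_i(1+N\eta_i/\kappa)\big(\kappa/(\kappa+N\eta_i)\big)^2\le1$, with $\lambda_{\max}(\mathcal Q)<1$ when all $\eta_i>0$; consequently the series $\sum_{m\ge1}\tilde q^\top\mathcal Q^{m-1}\tilde q$ converges when all $\eta_i>0$.
   Context: $\eta_i\ge0$, $\sum_i\eta_i<\infty$, $N>0$; $\kappa>0$ solves $1=\sum_i\eta_i/(\kappa+N\eta_i)$, $\gamma=\sum_iN\eta_i^2/(\kappa+N\eta_i)^2$, $q_i=\kappa/(\kappa+N\eta_i)$, $\tilde q_i=\eta_iq_i^2$, $\mathrm{diag}(q^2)$ the diagonal matrix with entries $q_i^2$. *)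

(* Defs.v *)
From HB Require Import structures.
From mathcomp Require Import all_boot all_order all_algebra.
From mathcomp Require Import all_classical all_reals all_analysis.
Set Implicit Arguments. Unset Strict Implicit. Unset Printing Implicit Defensive.
Import Order.TTheory GRing.Theory Num.Theory.
Local Open Scope ring_scope.

Section Defs.
Variables (R : realType) (n : nat) (N kappa : R) (eta : 'I_n -> R).

Definition gammaC : R := \sum_(i < n) N * eta i ^+ 2 / (kappa + N * eta i) ^+ 2.
Definition qv (i : 'I_n) : R := kappa / (kappa + N * eta i).
Definition qtv (i : 'I_n) : R := eta i * qv i ^+ 2.
Definition qtcol : 'cV[R]_n := \col_i qtv i.
Definition Qmat : 'M[R]_n :=
  diag_mx (\row_i qv i ^+ 2)
  + (N / ((1 - gammaC) * kappa ^+ 2)) *: (qtcol *m qtcol^T).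
End Defs.

Definition psd (R : realType) (n : nat) (A : 'M[R]_n) : Prop :=
  A^T = A /\ forall x : 'cV[R]_n, 0 <= (x^T *m A *m x) 0 0.

(* Main.v *)
Require Import Defs.
From HB Require Import structures.
From mathcomp Require Import all_boot all_order all_algebra.
From mathcomp Require Import all_classical all_reals all_analysis.
From mathcomp Require Import ring lra.
Import Order.TTheory GRing.Theory Num.Theory numFieldNormedType.Exports.
Local Open Scope ring_scope.

Section Forms.
Variables (R : realType) (n : nat).
Definition form (A : 'M[R]_n) (x : 'cV[R]_n) : R := (x^T *m A *m x) 0 0.

Lemma formD A B x : form (A + B) x = form A x + form B x.
Proof. by rewrite /form mulmxDr mulmxDl mxE. Qed.
Lemma formB A B x : form (A - B) x = form A x - form B x.
Proof. by rewrite /form mulmxBr mulmxBl !mxE. Qed.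
Lemma formZ a A x : form (a *: A) x = a * form A x.
Proof. by rewrite /form -scalemxAr -scalemxAl mxE. Qed.
Lemma form1 x : form 1%:M x = \sum_i x i 0 ^+ 2.
Proof.
rewrite /form mulmx1 mxE; apply: eq_bigr => i _; by rewrite mxE expr2.
Qed.
Lemma form1_ge0 x : 0 <= form 1%:M x.
Proof. by rewrite form1 sumr_ge0 // => i _; rewrite sqr_ge0. Qed.
Lemma form_congr S A x : S^T = S -> form (S *m A *m S) x = form A (S *m x).
Proof. by move=> hS; rewrite /form trmx_mul hS !mulmxA. Qed.
Lemma form_scal a x : form (a%:M) x = a * form 1%:M x.
Proof. by rewrite -formZ scalemx1. Qed.

Variable Q : 'M[R]_n.
Hypothesis Qsym : Q^T = Q.
Variable rho : R.
Hypothesis rho_gt0 : 0 < rho.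
Hypothesis Qge0 : forall x, 0 <= form Q x.
Hypothesis Qle : forall x, form Q x <= rho * form 1%:M x.

Lemma Qsq x : form (Q *m Q) x <= rho * form Q x.
Proof.
set S := rho%:M - Q.
have Ssym : S^T = S by rewrite /S linearB /= tr_scalar_mx Qsym.
have h1 : 0 <= form (S *m Q *m S) x by rewrite form_congr // Qge0.
have h2 : 0 <= form (Q *m S *m Q) x.
  by rewrite form_congr // /S formB form_scal subr_ge0 Qle.
move: h1 h2; rewrite /S !(mulmxBl, mulmxBr, mul_scalar_mx, mul_mx_scalar) -!scalemxAl -?scalemxAr ?scalerA.
rewrite -!mulmxA !(formB, formD, formZ).
set a := form Q x; set b := form (Q *m Q) x; set c := form (Q *m (Q *m Q)) x => h1 h2.
have : 0 <= rho * (rho * a - b) by lra.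
by rewrite pmulr_rge0 // subr_ge0.
Qed.
Lemma form_pow2 m x : form (Q ^+ m.+2) x = form (Q ^+ m) (Q *m x).
Proof. by rewrite exprS exprSr mulrA -!mulmxE form_congr. Qed.

Lemma Qpow_aux m : forall x : 'cV[R]_n,
  (0 <= form (Q ^+ m) x /\ form (Q ^+ m.+1) x <= rho * form (Q ^+ m) x) /\ (0 <= form (Q ^+ m.+1) x /\ form (Q ^+ m.+2) x <= rho * form (Q ^+ m.+1) x).
Proof.
elim: m => [|m IH] x.
  rewrite expr0 expr1 expr2 -mulmxE.
  have -> : (1 : 'M[R]_n) = 1%:M by [].
  split; split; [exact: form1_ge0 | exact: Qle | exact: Qge0 | ].
  by rewrite Qsq.
split; first exact: (IH x).2.
by rewrite !form_pow2; apply: (IH (Q *m x)).1.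
Qed.

Lemma Qpow_ge0 m x : 0 <= form (Q ^+ m) x.
Proof. by case: (Qpow_aux m x) => [[]]. Qed.

Lemma Qpow_le m x : form (Q ^+ m) x <= rho ^+ m * form 1%:M x.
Proof.
elim: m => [|m IH]; first by rewrite expr0 mul1r.
case: (Qpow_aux m x) => [[_ h] _].
apply: (le_trans h); rewrite exprS -mulrA ler_pM2l //.
Qed.

Lemma Qseries (t : 'cV[R]_n) : rho < 1 ->
  cvgn (series (fun m : nat => form (Q ^+ m) t)).
Proof.
move=> rho_lt1.
apply: (@series_le_cvg _ _ (geometric (form 1%:M t) rho)).
- by move=> m; apply: Qpow_ge0.
- by move=> m; apply: geometric_ge0; [apply: form1_ge0|apply: ltW].
- by move=> m /=; rewrite mulrC; apply: Qpow_le.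
- by apply: is_cvg_geometric_series; rewrite ger0_norm // ltW.
Qed.
End Forms.
Arguments form {R n}.
Lemma form_diag (R : realType) n (d : 'rV[R]_n) x :
  form (diag_mx d) x = \sum_i d 0 i * x i 0 ^+ 2.
Proof.
rewrite /form mul_mx_diag mxE; apply: eq_bigr => i _; rewrite !mxE; ring.
Qed.

Lemma form_outer (R : realType) n (v : 'cV[R]_n) x :
  form (v *m v^T) x = (\sum_i v i 0 * x i 0) ^+ 2.
Proof.
rewrite /form (_ : x^T *m (v *m v^T) *m x = (x^T *m v) *m (v^T *m x)); last by rewrite !mulmxA.
rewrite mxE big_ord1 expr2; congr (_ * _).
  rewrite mxE; by apply: eq_bigr => i _; rewrite !mxE mulrC.
rewrite mxE; by apply: eq_bigr => i _; rewrite !mxE.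
Qed.

Lemma wCS (R : realType) n (w x : 'I_n -> R) : (forall i, 0 <= w i) ->
  (\sum_i w i * x i) ^+ 2 <= (\sum_i w i) * \sum_i w i * x i ^+ 2.
Proof.
move=> w0; set W := \sum_i w i; set S := \sum_i w i * x i.
have W0 : 0 <= W by rewrite sumr_ge0.
have [W00|Wn0] := eqVneq W 0.
  have h := psumr_eq0P (fun i _ => w0 i) W00.
  have S0 : S = 0 by rewrite /S big1 // => i _; rewrite h // mul0r.
  by rewrite S0 W00 expr2 !mul0r.
have Wp : 0 < W by rewrite lt_neqAle eq_sym Wn0.
have h : 0 <= \sum_i w i * (W * x i - S) ^+ 2.
  by apply: sumr_ge0 => i _; rewrite mulr_ge0 ?sqr_ge0.
have e : \sum_i w i * (W * x i - S) ^+ 2 =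
   W ^+ 2 * (\sum_i w i * x i ^+ 2) - (2 * W * S) * S + S ^+ 2 * W.
  transitivity (\sum_i (W ^+ 2 * (w i * x i ^+ 2) - (2 * W * S) * (w i * x i)
                       + S ^+ 2 * w i)).
    by apply: eq_bigr => i _; ring.
  by rewrite big_split /= sumrB -!mulr_sumr.
rewrite e in h.
have : 0 <= W * (W * (\sum_i w i * x i ^+ 2) - S ^+ 2) by lra.
by rewrite pmulr_rge0 // subr_ge0.
Qed.

Theorem mainTheorem11 (R : realType) (n : nat) (N kappa : R) (eta : 'I_n -> R)
  (eta_ge0 : forall i, 0 <= eta i) (N_gt0 : 0 < N) (kappa_gt0 : 0 < kappa)
  (kappa_def : 1 = \sum_(i < n) eta i / (kappa + N * eta i)) :
  let Q := Qmat N kappa eta in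
  let bnd := \big[Num.max/0]_(i < n)
               ((1 + N * eta i / kappa) * (kappa / (kappa + N * eta i)) ^+ 2) in
  [/\ psd Q,
      (forall a : R, eigenvalue Q a -> a <= bnd),
      bnd <= 1,
      ((forall i, 0 < eta i) -> forall a : R, eigenvalue Q a -> a < 1) &
      ((forall i, 0 < eta i) ->
         cvgn (series (fun m : nat =>
           ((qtcol N kappa eta)^T *m (Q ^+ m) *m qtcol N kappa eta) 0 0)))].
Proof.
move=> Q bnd.
have den i : 0 < kappa + N * eta i.
  by have := mulr_ge0 (ltW N_gt0) (eta_ge0 i); lra.
have n_gt0 : (0 < n)%N.
  case: (posnP n) => // n0; exfalso; move: kappa_def.
  rewrite big1 => [|[k hk] _]; last by exfalso; move: hk; rewrite n0.
  by move/eqP; rewrite oner_eq0.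
set b := fun i => (1 + N * eta i / kappa) * (kappa / (kappa + N * eta i)) ^+ 2.
have hb i : b i = kappa / (kappa + N * eta i).
  rewrite /b; field; rewrite ?(gt_eqF (den i)) ?(gt_eqF kappa_gt0) //.
have b_le i : b i <= bnd by rewrite /bnd (bigD1 i) //= le_max lexx.
have bnd_le1 : bnd <= 1.
  apply: (big_ind (fun y => y <= 1)) => [|x y hx hy|i _]; first exact: ler01.
    by rewrite ge_max hx hy.
  by rewrite -/(b i) hb ler_pdivrMr ?den // mul1r; have := mulr_ge0 (ltW N_gt0) (eta_ge0 i); lra.
have bnd_gt0 : 0 < bnd.
  apply: (lt_le_trans _ (b_le (Ordinal n_gt0))); rewrite hb divr_gt0 ?den //.
set W := \sum_i qtv N kappa eta i.
have t0 i : 0 <= qtv N kappa eta i by rewrite /qtv mulr_ge0 ?sqr_ge0.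
have W0 : 0 <= W by rewrite sumr_ge0.
have hW : 1 - gammaC N kappa eta = W / kappa.
  rewrite /gammaC {1}kappa_def -sumrB mulr_suml; apply: eq_bigr => i _.
  rewrite /qtv /qv; field; rewrite ?(gt_eqF (den i)) ?(gt_eqF kappa_gt0) //.
set c := N / ((1 - gammaC N kappa eta) * kappa ^+ 2).
have c0 : 0 <= c.
  rewrite /c hW; apply: divr_ge0; first exact: ltW N_gt0.
  apply: mulr_ge0; last exact: sqr_ge0.
  by apply: divr_ge0 => //; exact: ltW.
have cW : c * W <= N / kappa.
  have [->|Wn0] := eqVneq W 0; first by rewrite mulr0 divr_ge0 // ltW.
  rewrite /c hW le_eqVlt; apply/orP; left; apply/eqP.
  field; rewrite Wn0 (gt_eqF kappa_gt0) //.
have formQ : forall x : 'cV[R]_n, form Q x = \sum_i qv N kappa eta i ^+ 2 * x i 0 ^+ 2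
    + c * (\sum_i qtv N kappa eta i * x i 0) ^+ 2.
  move=> x; rewrite /Q /Qmat formD formZ form_diag form_outer; congr (_ + _ * _).
    by apply: eq_bigr => i _; rewrite !mxE.
  by congr (_ ^+ 2); apply: eq_bigr => i _; rewrite !mxE.
have Qsym : Q^T = Q.
  by rewrite /Q /Qmat linearD /= tr_diag_mx linearZ /= trmx_mul trmxK.
have Qge0 x : 0 <= form Q x.
  rewrite formQ; apply: addr_ge0; last exact: mulr_ge0 c0 (sqr_ge0 _).
  by apply: sumr_ge0 => i _; rewrite mulr_ge0 ?sqr_ge0.
have Qle x : form Q x <= bnd * form 1%:M x.
  rewrite formQ form1.
  apply: (@le_trans _ _ (\sum_i b i * x i 0 ^+ 2)); last first.
    by rewrite mulr_sumr; apply: ler_sum => i _; rewrite ler_wpM2r ?sqr_ge0.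
  have -> : \sum_i b i * x i 0 ^+ 2 = \sum_i qv N kappa eta i ^+ 2 * x i 0 ^+ 2
      + N / kappa * \sum_i qtv N kappa eta i * x i 0 ^+ 2.
    rewrite mulr_sumr -big_split /=; apply: eq_bigr => i _.
    rewrite /b /qtv /qv; field; rewrite ?(gt_eqF (den i)) ?(gt_eqF kappa_gt0) //.
  rewrite lerD2l.
  have hcs := @wCS R n _ (fun i => x i 0) t0.
  have hs : 0 <= \sum_i qtv N kappa eta i * x i 0 ^+ 2.
    by apply: sumr_ge0 => i _; rewrite mulr_ge0 ?sqr_ge0.
  apply: (le_trans (ler_wpM2l c0 hcs)); rewrite mulrA.
  by rewrite ler_wpM2r.
have eig a : eigenvalue Q a -> a <= bnd.
  move=> /eigenvalueP [v hv vnz].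
  have e : form Q v^T = a * form 1%:M v^T.
    by rewrite /form trmxK hv -scalemxAl mxE mulmx1.
  have s0 : 0 < form 1%:M v^T.
    rewrite lt_neqAle form1_ge0 andbT eq_sym; apply/negP => /eqP h.
    move: h; rewrite form1 => h.
    have h0 := psumr_eq0P (fun j _ => sqr_ge0 (v^T j 0)) h.
    move/eqP: vnz; apply; apply/rowP => i; rewrite mxE.
    by have := h0 i isT; rewrite mxE => /eqP; rewrite sqrf_eq0 => /eqP.
  by rewrite -(ler_pM2r s0) -e Qle.
have bnd_lt1 : (forall i, 0 < eta i) -> bnd < 1.
  move=> eta_gt0.
  apply: (big_ind (fun y => y < 1)) => [|x y hx hy|i _]; first exact: ltr01.
    by rewrite gt_max hx hy.
  by rewrite -/(b i) hb ltr_pdivrMr ?den // mul1r; have := mulr_gt0 N_gt0 (eta_gt0 i); lra.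
split.
- by split => // x; apply: Qge0.
- exact: eig.
- exact: bnd_le1.
- by move=> eta_gt0 a /eig ha; apply: le_lt_trans ha (bnd_lt1 eta_gt0).
- move=> eta_gt0.
  have := @Qseries R n Q Qsym bnd bnd_gt0 Qge0 Qle (qtcol N kappa eta) (bnd_lt1 eta_gt0).
  by rewrite /form.
Qed.
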